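(* Let $\delta=x^{\mathbf d}f(\theta)$ be a homogeneous differential operator of degree $\mathbf d$ with $\mathbf d\neq\mathbf 0$, $-\mathbf d\in S$, $\mathbf d=q\mathbf e$ ($q\in\mathbb Z_{\ge1}$, $\mathbf e$ primitive). Then $\delta$ fixes some nonzero monomial ideal of $R$ if and only if there exists a subset $\mathcal B\subseteq\mathbb N^n$ compatible with $\mathbf d$ such that (1) $\operatorname{val}(\mathbf a)>-\infty$ for all $\mathbf a\in W_{\mathcal B}$; (2) for all $\mathbf a\in V'_{\mathrm{mon}}(f)\cap W_{\mathcal B}$ and $i=0,\dots,q-1$, $\mathbf a-i\mathbf e\in V_{\mathrm{mon}}(f)$; (3) for all $\mathbf a,\mathbf b\in V'_{\mathrm{mon}}(f)\cap W_{\mathcal B}$, $\mathbf a-\mathbf b\notin S-\mathbf e$. In this case $\delta$ fixes the ideal $I=(x^{\mathbf a}\mid\mathbf a\in V'_{\mathrm{mon}}(f)\cap W_{\mathcal B})$, and $\operatorname{Exp} I=\{\mathbf a\in W_{\mathcal B}:\operatorname{pval}(\mathbf a)\ge 0\}$.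
   Context: Standing notation. Fix $d\ge 1$. Let $\sigma\subseteq\mathbb R^d$ be a full-dimensional, strongly convex rational polyhedral cone, so $\sigma^\vee$ is full-dimensional and strongly convex. $S=\sigma^\vee\cap\mathbb Z^d$, $R=\mathbb C[S]$ with monomial basis $x^{\mathbf a}$, $\mathbf a\in S$. $h_1,\dots,h_n$ are the primitive support functions of the facets of $\sigma^\vee$, so $S=\{\mathbf a\in\mathbb Z^d:h_i(\mathbf a)\ge0\ \forall i\}$. $(g,m)!=\prod_{j=0}^m(g-j)$ for $m\ge0$, $=1$ for $m<0$; $H_{\mathbf d}=\prod_i(h_i,h_i(-\mathbf d)-1)!$. For $f$ divisible by $H_{\mathbf d}$, $\delta=x^{\mathbf d}f(\theta)$ acts by $\delta(x^{\mathbf a})=f(\mathbf a)x^{\mathbf a+\mathbf d}$. $\operatorname{Exp} I=\{\mathbf a\in S:x^{\mathbf a}\in I\}$; $I$ is $\delta$-fixed if $\delta(I)=I$. $V_{\mathrm{mon}}(f)=\{\mathbf a\in\mathbb Z^d:f(\mathbf a)=0\}$; $S-\mathbf e=\{\mathbf s-\mathbf e:\mathbf s\in S\}$. For $\mathbf a\in\mathbb Z^d$, $\operatorname{val}(\mathbf a)=\inf\{t\in\mathbb R:\mathbf a+t\mathbf d\in V_{\mathrm{mon}}(f)\}\in\mathbb R\cup\{\pm\infty\}$ ($\inf\emptyset=+\infty$). When $\operatorname{val}(\mathbf a)$ is finite, $\operatorname{pval}(\mathbf a)=\max\{t\in[\operatorname{val}(\mathbf a),\operatorname{val}(\mathbf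 a)+1):\mathbf a+t\mathbf d\in V_{\mathrm{mon}}(f)\}$ and $\operatorname{vpt}(\mathbf a)=\mathbf a+\operatorname{pval}(\mathbf a)\mathbf d$. $V'_{\mathrm{mon}}(f)=\{\operatorname{vpt}(\mathbf a):\mathbf a\in\mathbb Z^d,\ \operatorname{val}(\mathbf a)\text{ finite}\}$. A tuple $\beta\in\mathbb N^n$ is compatible with $\mathbf d$ if for every $i$, $\beta_i=0$ or $h_i(\mathbf d)=0$; $\mathcal B\subseteq\mathbb N^n$ is compatible with $\mathbf d$ if each element is. $W_\beta=\{\mathbf a\in S: h_i(\mathbf a)\ge\beta_i\ \forall i\}$, $W_{\mathcal B}=\bigcup_{\beta\in\mathcal B}W_\beta$. *)

(* Defs.v *)
From HB Require Import structures.
From mathcomp Require Import all_boot all_order all_algebra.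
From mathcomp Require Import Rstruct complex.
From mathcomp Require Import mpoly.

Set Implicit Arguments.
Unset Strict Implicit.
Unset Printing Implicit Defensive.

Import Order.TTheory GRing.Theory Num.Theory.
Local Open Scope ring_scope.

Definition CC : numClosedFieldType := complex.complex Rdefinitions.R.

Notation zvec dim := 'rV[int]_dim.

Definition lin (dim : nat) (h a : zvec dim) : int :=
  \sum_(j < dim) h ord0 j * a ord0 j.

Definition primitive (dim : nat) (v : zvec dim) : Prop :=
  v != 0 /\ forall (k : int) (w : zvec dim), v = k *: w -> `|k| = 1.

(* Standing hypotheses: h_1..h_n are the primitive support functions of the
   facets of the full-dimensional strongly convex rational polyhedral cone
   sigma^vee = { x | h_i(x) >= 0 for all i }. *)
Definition facet_data (dim n : nat) (h : 'I_n -> zvec dim) : Prop :=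
  [/\ (0 < dim)%N,
      (forall i, primitive (h i)),
      (* sigma^vee is full-dimensional *)
      (exists a : zvec dim, forall i, 0 < lin (h i) a),
      (* sigma^vee is strongly convex (contains no line) *)
      (forall a : zvec dim, (forall i, lin (h i) a = 0) -> a = 0) &
      (* every h_i cuts out a facet (the h_i are exactly the facet normals) *)
      (forall i, exists a : zvec dim,
          lin (h i) a = 0 /\ forall j, j != i -> 0 < lin (h j) a)].

Definition inS (dim n : nat) (h : 'I_n -> zvec dim) (a : zvec dim) : Prop :=
  forall i, 0 <= lin (h i) a.

Definition linpoly (dim : nat) (h : zvec dim) : {mpoly CC[dim]} :=
  \sum_(j < dim) ((h ord0 j)%:~R : CC) *: 'X_j.

Definition ffact (dim : nat) (g : {mpoly CC[dim]}) (m : int) : {mpoly CC[dim]} :=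
  match m with
  | Posz k => \prod_(j < k.+1) (g - (j%:R : CC)%:MP)
  | Negz _ => 1
  end.

Definition Hpoly (dim n : nat) (h : 'I_n -> zvec dim) (dv : zvec dim)
  : {mpoly CC[dim]} :=
  \prod_(i < n) ffact (linpoly (h i)) (lin (h i) (- dv) - 1).

Definition evalZ (dim : nat) (f : {mpoly CC[dim]}) (a : zvec dim) : CC :=
  f.@[fun j => (a ord0 j)%:~R].

Definition Vmon (dim : nat) (f : {mpoly CC[dim]}) (a : zvec dim) : Prop :=
  evalZ f a = 0.

(* An element of R = C[S] is given by its coefficient function
   (a |-> coefficient of x^a), which has finite support contained in S. *)
Definition inR (dim n : nat) (h : 'I_n -> zvec dim) (r : zvec dim -> CC) : Prop :=
  (exists s : seq (zvec dim), forall a, r a != 0 -> a \in s) /\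
  (forall a, r a != 0 -> inS h a).

Definition monomial (dim : nat) (a : zvec dim) : zvec dim -> CC :=
  fun b => if b == a then 1 else 0.

(* delta = x^d f(theta), the C-linear map with delta(x^a) = f(a) x^(a+d):
   the coefficient of x^b in delta(r) is f(b - d) * (coefficient of x^(b-d) in r). *)
Definition delta (dim : nat) (f : {mpoly CC[dim]}) (dv : zvec dim)
  (r : zvec dim -> CC) : zvec dim -> CC :=
  fun b => evalZ f (b - dv) * r (b - dv).

(* E is a monoid ideal of S (E + S \subseteq E, E \subseteq S); these are exactly
   the exponent sets Exp I of the monomial ideals I of R. *)
Definition Sideal (dim n : nat) (h : 'I_n -> zvec dim) (E : zvec dim -> Prop) : Prop :=
  (forall a, E a -> inS h a) /\ (forall a s, E a -> inS h s -> E (a + s)).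

(* The monomial ideal of R spanned by the monomials x^a, a in E (E an S-ideal):
   the elements of R all of whose monomials have exponent in E. *)
Definition mideal (dim n : nat) (h : 'I_n -> zvec dim) (E : zvec dim -> Prop)
  (r : zvec dim -> CC) : Prop :=
  inR h r /\ forall a, r a != 0 -> E a.

(* Exponent set of the ideal generated by the monomials x^a, a in G:
   G + S. *)
Definition genE (dim n : nat) (h : 'I_n -> zvec dim) (G : zvec dim -> Prop)
  (b : zvec dim) : Prop :=
  exists a, G a /\ inS h (b - a).

Definition Exp (dim n : nat) (h : 'I_n -> zvec dim) (I : (zvec dim -> CC) -> Prop)
  (a : zvec dim) : Prop :=
  inS h a /\ I (monomial a).

Definition fixes (dim : nat) (f : {mpoly CC[dim]}) (dv : zvec dim)
  (I : (zvec dim -> CC) -> Prop) : Prop :=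
  (forall r, I r -> I (delta f dv r)) /\
  (forall r, I r -> exists r', I r' /\ forall b, delta f dv r' b = r b).

Definition onV (dim : nat) (f : {mpoly CC[dim]}) (dv a : zvec dim) (t : rat) : Prop :=
  exists b : zvec dim,
    (forall j, ((b ord0 j)%:~R : rat) = (a ord0 j)%:~R + t * (dv ord0 j)%:~R)
    /\ Vmon f b.

(* val(a) > -oo  (the set { t | a + t d in V_mon(f) } is bounded below;
   this includes val(a) = +oo, i.e. the empty set). *)
Definition val_gt_ninf (dim : nat) (f : {mpoly CC[dim]}) (dv a : zvec dim) : Prop :=
  exists m : rat, forall t, onV f dv a t -> m <= t.

Definition is_val (dim : nat) (f : {mpoly CC[dim]}) (dv a : zvec dim) (v : rat) : Prop :=
  (forall t, onV f dv a t -> v <= t) /\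
  (forall w, (forall t, onV f dv a t -> w <= t) -> w <= v).

Definition is_pval (dim : nat) (f : {mpoly CC[dim]}) (dv a : zvec dim) (p : rat) : Prop :=
  exists v, [/\ is_val f dv a v, onV f dv a p, v <= p, p < v + 1 &
              forall t, onV f dv a t -> v <= t -> t < v + 1 -> t <= p].

Definition Vmon' (dim : nat) (f : {mpoly CC[dim]}) (dv b : zvec dim) : Prop :=
  exists (a : zvec dim) (p : rat), is_pval f dv a p /\
    forall j, ((b ord0 j)%:~R : rat) = (a ord0 j)%:~R + p * (dv ord0 j)%:~R.

Definition compatible (dim n : nat) (h : 'I_n -> zvec dim) (dv : zvec dim)
  (beta : 'I_n -> nat) : Prop :=
  forall i, beta i = 0%N \/ lin (h i) dv = 0.

Definition W (dim n : nat) (h : 'I_n -> zvec dim) (beta : 'I_n -> nat)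
  (a : zvec dim) : Prop :=
  inS h a /\ forall i, (beta i)%:Z <= lin (h i) a.

Definition WB (dim n : nat) (h : 'I_n -> zvec dim) (B : ('I_n -> nat) -> Prop)
  (a : zvec dim) : Prop :=
  exists beta, B beta /\ W h beta a.

Definition good_family (dim n : nat) (h : 'I_n -> zvec dim) (f : {mpoly CC[dim]})
  (dv ev : zvec dim) (q : nat) (B : ('I_n -> nat) -> Prop) : Prop :=
  [/\
      (exists beta, B beta),
      (forall beta, B beta -> compatible h dv beta),
      (forall a, WB h B a -> val_gt_ninf f dv a),
      (forall a, Vmon' f dv a -> WB h B a ->
         forall i : nat, (i < q)%N -> Vmon f (a - (i%:Z) *: ev)) &
      (forall a b, Vmon' f dv a -> WB h B a -> Vmon' f dv b -> WB h B b ->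
         ~ (exists s, inS h s /\ a - b = s - ev))].

(* Main.v *)
Require Import Defs.
From HB Require Import structures.
From mathcomp Require Import all_boot all_order all_algebra.
From mathcomp Require Import Rstruct complex.
From mathcomp Require Import mpoly.
From Stdlib Require Import Classical Lia.
From mathcomp Require Import zify ring lra.
Import Order.TTheory GRing.Theory Num.Theory.
Local Open Scope ring_scope.

Lemma linD dim (hh a b : 'rV[int]_dim) : lin hh (a + b) = lin hh a + lin hh b.
Proof. rewrite /lin -big_split; apply: eq_bigr => j _; by rewrite mxE mulrDr. Qed.
Lemma linZ dim (hh a : 'rV[int]_dim) k : lin hh (k *: a) = k * lin hh a.
Proof. rewrite /lin mulr_sumr; apply: eq_bigr => j _; by rewrite mxE mulrCA. Qed.
Lemma linN dim (hh a : 'rV[int]_dim) : lin hh (- a) = - lin hh a.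
Proof. by rewrite -scaleN1r linZ mulN1r. Qed.
Lemma linB dim (hh a b : 'rV[int]_dim) : lin hh (a - b) = lin hh a - lin hh b.
Proof. by rewrite linD linN. Qed.
Lemma lin0 dim (hh : 'rV[int]_dim) : lin hh 0 = 0.
Proof. by rewrite -(scale0r (0 : 'rV[int]_dim)) linZ mul0r. Qed.

Lemma nat_max (P : nat -> Prop) n0 N : P n0 -> (forall n, P n -> (n <= N)%N) ->
  exists n, P n /\ forall m, P m -> (m <= n)%N.
Proof.
move=> P0 HN.
have H : forall k, (k <= N)%N -> (exists n, P n /\ (N - k <= n)%N) ->
   exists n, P n /\ forall m, P m -> (m <= n)%N.
  elim=> [|k IH] Hk [n [Pn Hn]].
    exists n; split=> // m Pm; apply: leq_trans (HN _ Pm) _; by rewrite subn0 in Hn.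
  case: (classic (exists n', P n' /\ (N - k <= n')%N)) => [E|NE].
    by apply: IH => //; apply: ltnW.
  exists n; split=> // m Pm; case: (leqP m n) => // Hmn.
  exfalso; apply: NE; exists m; split=> //.
  have := HN _ Pm; lia.
apply: (H N) => //; exists n0; split=> //; by rewrite subnn.
Qed.

Lemma nat_min (P : nat -> Prop) n0 : P n0 ->
  exists n, P n /\ forall m, P m -> (n <= m)%N.
Proof.
move=> P0.
have H : forall k, (forall n, P n -> (k <= n)%N) \/ exists n, P n /\ (n < k)%N /\ forall m, P m -> (n <= m)%N.
  elim=> [|k [IH|IH]]; [by left| |by right; case: IH => n [? [? ?]]; exists n; split=> //; split=> //; lia].
  case: (classic (P k)) => Pk.
    right; exists k; split=> //; split=> //.
  left=> m Pm; have := IH _ Pm; rewrite leq_eqVlt => /orP[/eqP E|//]; by subst.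
case: (H n0.+1) => [HH|[n [Pn [_ Hn]]]]; last by exists n.
by have := HH _ P0; rewrite ltnn.
Qed.

Lemma int_max (P : int -> Prop) k0 N : P k0 -> (forall k, P k -> k <= N) ->
  exists K, P K /\ forall k, P k -> k <= K.
Proof.
move=> P0 HN.
have [n [Pn Hn]] : exists n, P (k0 + n%:Z) /\ forall m, P (k0 + m%:Z) -> (m <= n)%N.
  apply: (nat_max _ 0 `|N - k0|%N); first by rewrite addr0.
  move=> m Pm; have := HN _ Pm => HH.
  rewrite -lez_nat; apply: le_trans (lez_abs _); lia.
exists (k0 + n%:Z); split=> // k Pk.
case: (lerP k k0) => Hk; first by apply: le_trans Hk _; rewrite lerDl.
have Hk' : k = k0 + (`|k - k0|%N)%:Z by rewrite gez0_abs ?subr_ge0 ?ltW //; ring.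
have := Hn `|k - k0|%N; rewrite -Hk' => /(_ Pk).
rewrite -lez_nat => HH; rewrite [X in X <= _]Hk'; lia.
Qed.

Lemma int_min (P : int -> Prop) k0 N : P k0 -> (forall k, P k -> N <= k) ->
  exists K, P K /\ forall k, P k -> K <= k.
Proof.
move=> P0 HN.
have [K [PK HK]] : exists K, P (- K) /\ forall k, P (- k) -> k <= K.
  apply: (int_max (fun k => P (- k)) (- k0) (- N)); first by rewrite opprK.
  by move=> k Pk; have := HN _ Pk; lia.
exists (- K); split=> // k Pk; have := HK (- k); rewrite opprK => /(_ Pk); lia.
Qed.

Lemma eval_linpoly dim (hh c : 'rV[int]_dim) :
  evalZ (linpoly hh) c = (lin hh c)%:~R.
Proof.
rewrite /evalZ /linpoly raddf_sum /lin rmorph_sum; apply: eq_bigr => j _.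
rewrite rmorphM /=.
change (meval (fun j0 : 'I_dim => (c ord0 j0)%:~R) ((hh ord0 j)%:~R *: 'X_j) = (hh ord0 j)%:~R * (c ord0 j)%:~R :> CC).
by rewrite mevalZ mevalXU.
Qed.

Lemma F1gen dim n (h : 'I_n -> 'rV[int]_dim) (f : {mpoly CC[dim]}) dv c i :
  (exists g : {mpoly CC[dim]}, f = Hpoly h dv * g) ->
  inS h c -> lin (h i) (c + dv) < 0 -> Vmon f c.
Proof.
move=> [g ->] Hc Hi; rewrite /Vmon /evalZ mevalM.
suff -> : (Hpoly h dv).@[fun j => (c ord0 j)%:~R] = 0 by rewrite mul0r.
rewrite /Hpoly rmorph_prod (bigD1 i) //=.
apply/eqP; rewrite mulf_eq0; apply/orP; left; apply/eqP.
have Hci := Hc i; move: Hi; rewrite linD => Hi.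
have : 0 <= lin (h i) (- dv) - 1 by rewrite linN; lia.
case E: (lin (h i) (- dv) - 1) => [k|//] _.
case Ec: (lin (h i) c) Hci => [l|//] _.
have Hl : (l < k.+1)%N.
  move: E Ec Hi; rewrite linN => E Ec Hi.
  have : (Posz l <= Posz k) by rewrite -E -Ec; lia.
  by rewrite lez_nat.
rewrite /ffact rmorph_prod (bigD1 (Ordinal Hl)) //=.
apply/eqP; rewrite mulf_eq0; apply/orP; left; apply/eqP.
rewrite mevalB mevalC.
have -> : (linpoly (h i)).@[fun j => (c ord0 j)%:~R] = (l%:R : CC).
  by have := @eval_linpoly _ (h i) c; rewrite /evalZ Ec => ->.
by rewrite subrr.
Qed.

Lemma monomialE dim (a b : 'rV[int]_dim) : monomial a b != 0 -> b = a.
Proof. rewrite /monomial; case: (eqVneq b a) => [->//|_]; by rewrite eqxx. Qed.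

Lemma monomial_aa dim (a : 'rV[int]_dim) : monomial a a = 1.
Proof. by rewrite /monomial eqxx. Qed.

Lemma mideal_mono {dim n} {h : 'I_n -> 'rV[int]_dim} {E a} :
  Sideal h E -> E a -> mideal h E (monomial a).
Proof.
move=> [ES _] Ea; split; [split|].
- by exists [:: a] => b /monomialE ->; rewrite inE.
- by move=> b /monomialE ->; apply: ES.
- by move=> b /monomialE ->.
Qed.

Lemma fixes_char {dim n} {h : 'I_n -> 'rV[int]_dim} {f dv E} :
  Sideal h E -> inS h (-dv) ->
  fixes f dv (mideal h E) <->
  ((forall a, E a -> evalZ f a != 0 -> E (a + dv)) /\
   (forall b, E b -> evalZ f (b - dv) != 0)).
Proof.
move=> [ES EI] Hmd; split.
- move=> [F1 F2]; split.
  + move=> a Ea Hfa.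
    have [_ HH] := F1 _ (mideal_mono (conj ES EI) Ea).
    apply: HH; rewrite /delta addrK monomial_aa mulr1 //.
  + move=> b Eb.
    have [r' [_ Hr']] := F2 _ (mideal_mono (conj ES EI) Eb).
    have := Hr' b; rewrite monomial_aa /delta => H1.
    apply/negP => /eqP H0; move: H1; rewrite H0 mul0r => /eqP; by rewrite eq_sym oner_eq0.
- move=> [A B]; split.
  + move=> r [[[s Hs] HS] HE]; split; [split|].
    * exists (map (fun x => x + dv) s) => b; rewrite /delta mulf_eq0 negb_or => /andP[_ Hr].
      apply/mapP; exists (b - dv); [exact: Hs|]; by rewrite subrK.
    * move=> b; rewrite /delta mulf_eq0 negb_or => /andP[Hf Hr].
      apply: ES; rewrite -(subrK dv b); apply: A => //; exact: HE.
    * move=> b; rewrite /delta mulf_eq0 negb_or => /andP[Hf Hr].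
      rewrite -(subrK dv b); apply: A => //; exact: HE.
  + move=> r [[[s Hs] HS] HE].
    exists (fun c => r (c + dv) / evalZ f c); split; [split; [split|]|].
    * exists (map (fun x => x - dv) s) => c; rewrite mulf_eq0 negb_or => /andP[Hr _].
      apply/mapP; exists (c + dv); [exact: Hs|]; by rewrite addrK.
    * move=> c; rewrite mulf_eq0 negb_or => /andP[Hr _].
      rewrite -(addrK dv c); apply: ES; apply: EI => //; exact: HE.
    * move=> c; rewrite mulf_eq0 negb_or => /andP[Hr _].
      rewrite -(addrK dv c); apply: EI => //; exact: HE.
    * move=> b; rewrite /delta subrK.
      case: (eqVneq (r b) 0) => [->|Hrb]; first by rewrite mul0r mulr0.
      by rewrite mulrCA mulfV ?mulr1 //; apply: B; apply: HE.
Qed.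

Ltac vec := apply/rowP => ?; rewrite !mxE; ring.

Section Main.
Variables (dim n : nat) (h : 'I_n -> 'rV[int]_dim) (f : {mpoly CC[dim]})
  (dv ev : 'rV[int]_dim) (q : nat).
Hypothesis Hfacet : facet_data h.
Hypothesis Hdiv : exists g : {mpoly CC[dim]}, f = Hpoly h dv * g.
Hypothesis Hmd : inS h (- dv).
Hypothesis Hq : (0 < q)%N.
Hypothesis Hprim : primitive ev.
Hypothesis Hdq : dv = q%:Z *: ev.

Definition root a (k : int) := Vmon f (a + k *: ev).

Lemma lin_dv i : lin (h i) dv = q%:Z * lin (h i) ev.
Proof. by rewrite Hdq linZ. Qed.

Lemma lin_ev_le0 i : lin (h i) ev <= 0.
Proof. have := Hmd i; rewrite linN lin_dv; have : (0 < q%:Z) by []; nia. Qed.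

Lemma lin_ev0 i : lin (h i) dv = 0 -> lin (h i) ev = 0.
Proof. rewrite lin_dv => /eqP; rewrite mulf_eq0 => /orP[/eqP Hq0|/eqP//]; move: Hq Hq0; lia. Qed.

Lemma inS_add {a b} : inS h a -> inS h b -> inS h (a + b).
Proof. by move=> Ha Hb i; rewrite linD addr_ge0. Qed.

Lemma inS_scale {k : int} {s} : 0 <= k -> inS h s -> inS h (k *: s).
Proof. by move=> Hk Hs i; rewrite linZ mulr_ge0. Qed.

Lemma inS_me : inS h (- ev).
Proof. by move=> i; rewrite linN oppr_ge0 lin_ev_le0. Qed.

Lemma inS_down {a k j} : inS h (a + k *: ev) -> j <= k -> inS h (a + j *: ev).
Proof.
move=> Ha Hjk.
have -> : a + j *: ev = (a + k *: ev) + (k - j) *: (- ev) by vec.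
by apply: inS_add => //; apply: inS_scale; [lia|exact: inS_me].
Qed.

Lemma notinS {a} : ~ inS h a -> exists i, lin (h i) a < 0.
Proof.
move=> H; apply: NNPP => H2; apply: H => i.
by case: (lerP 0 (lin (h i) a)) => // Hi; exfalso; apply: H2; exists i.
Qed.

Lemma exit_exists {a k0 k1} : k0 <= k1 -> inS h (a + k0 *: ev) -> ~ inS h (a + k1 *: ev) ->
  exists k, [/\ k0 <= k, k < k1, inS h (a + k *: ev) & ~ inS h (a + (k + 1) *: ev)].
Proof.
move=> Hk S0 S1.
have [K [[HK1 [HK2 HK3]] HK]] := int_max (fun k => k0 <= k /\ k <= k1 /\ inS h (a + k *: ev))
  k0 k1 (conj (lexx _) (conj Hk S0)) (fun k Hk => proj1 (proj2 Hk)).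
have HK4 : K < k1.
  by rewrite lt_neqAle HK2 andbT; apply/eqP => E; apply: S1; rewrite -E.
exists K; split=> // SK.
have : k0 <= K + 1 /\ K + 1 <= k1 /\ inS h (a + (K + 1) *: ev) by split; [lia|split; [lia|exact: SK]].
by move/HK; lia.
Qed.

Lemma root_exit {a k} : inS h (a + k *: ev) -> ~ inS h (a + (k + 1) *: ev) ->
  root a (k + 1 - q%:Z).
Proof.
move=> S0 /notinS [i Hi].
apply: (@F1gen _ _ h f dv _ i Hdiv).
  by refine (inS_down S0 _); lia.
by have -> : a + (k + 1 - q%:Z) *: ev + dv = a + (k + 1) *: ev by rewrite Hdq; vec.
Qed.

Lemma exists_i0 : exists i, lin (h i) ev < 0.
Proof.
apply: NNPP => H.
have [_ _ _ Hsc _] := Hfacet.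
have : ev = 0.
  apply: Hsc => i; apply/eqP; rewrite eq_le lin_ev_le0 /=.
  by case: (lerP 0 (lin (h i) ev)) => // Hi; exfalso; apply: H; exists i.
by move/eqP; have [/negP] := Hprim.
Qed.

Lemma root_exists {a} : inS h a -> exists k, root a k.
Proof.
move=> Sa; have [i0 Hi0] := exists_i0.
have Sa0 := Sa i0.
have S1 : ~ inS h (a + (lin (h i0) a + 1) *: ev).
  move=> HS; have := HS i0; rewrite linD linZ; nia.
have Sa' : inS h (a + 0 *: ev) by rewrite scale0r addr0.
have Hle : 0 <= lin (h i0) a + 1 by lia.
have [k [_ _ Sk Sk1]] := exit_exists Hle Sa' S1.
by exists (k + 1 - q%:Z); apply: root_exit.
Qed.

Definition minroot a m := root a m /\ forall k, root a k -> m <= k.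
Definition pvalZ a P := exists m, [/\ minroot a m, root a P, m <= P, P < m + q%:Z &
  forall k, root a k -> k < m + q%:Z -> k <= P].

Lemma rootS a j k : root (a + j *: ev) k = root a (j + k).
Proof. by rewrite /root; congr Vmon; vec. Qed.

Lemma minroot_ex {a M k0} : root a k0 -> (forall k, root a k -> M <= k) -> exists m, minroot a m.
Proof. move=> R0 HM; have [m [Rm Hm]] := int_min (root a) k0 M R0 HM; by exists m. Qed.

Lemma pvalZ_ex {a m} : minroot a m -> exists P, pvalZ a P.
Proof.
move=> [Rm Hm].
have Hmq : m < m + q%:Z by move: Hq; lia.
have [P [[RP HP1] HP]] := int_max (fun k => root a k /\ k < m + q%:Z) m (m + q%:Z)
  (conj Rm Hmq) (fun k Hk => ltW (proj2 Hk)).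
exists P, m; split=> //.
- by apply: HP; split=> //; lia.
- by move=> k Rk Hk; apply: HP.
Qed.

Lemma pvalZ_uniq {a P P'} : pvalZ a P -> pvalZ a P' -> P = P'.
Proof.
move=> [m [[Rm Hm] RP H1 H2 H3]] [m' [[Rm' Hm'] RP' H1' H2' H3']].
have E : m = m' by have := Hm _ Rm'; have := Hm' _ Rm; lia.
subst m'; have := H3 _ RP' H2'; have := H3' _ RP H2; lia.
Qed.

Lemma pvalZ_shift {a P} j : pvalZ a P -> pvalZ (a + j *: ev) (P - j).
Proof.
move=> [m [[Rm Hm] RP H1 H2 H3]]; exists (m - j); split.
- split; first by rewrite rootS; have -> : j + (m - j) = m by ring.
  by move=> k; rewrite rootS => /Hm; lia.
- by rewrite rootS; have -> : j + (P - j) = P by ring.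
- lia.
- lia.
- by move=> k; rewrite rootS => /H3 HH Hk; have := HH ltac:(lia); lia.
Qed.

Lemma qpos : 0 < (q%:R : rat).
Proof. by rewrite ltr0n. Qed.

Lemma intrq : ((q%:Z)%:~R : rat) = q%:R.
Proof. by []. Qed.

Lemma ratq_le (k k' : int) : (k%:~R / q%:R <= k'%:~R / q%:R :> rat) = (k <= k').
Proof. rewrite ler_pM2r. by rewrite ler_int. by rewrite invr_gt0 qpos. Qed.

Lemma ratq_lt (k k' : int) : (k%:~R / q%:R < k'%:~R / q%:R :> rat) = (k < k').
Proof. rewrite ltr_pM2r. by rewrite ltr_int. by rewrite invr_gt0 qpos. Qed.

Lemma ratq_add1 (k : int) : (k%:~R / q%:R + 1 : rat) = (k + q%:Z)%:~R / q%:R.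
Proof.
rewrite intrD intrq mulrDl divff //; by rewrite gt_eqF // qpos.
Qed.

Lemma onV_of_root {a k} : root a k -> onV f dv a (k%:~R / q%:R).
Proof.
move=> Rk; exists (a + k *: ev); split=> // j.
rewrite Hdq !mxE intrD intrM intrM intrq; field.
by rewrite gt_eqF // qpos.
Qed.

Lemma onV_root {a t} : onV f dv a t -> exists k, root a k /\ t = k%:~R / q%:R.
Proof.
move=> [b [Hb Vb]].
set r := t * q%:R.
have Hr : forall j, ((b ord0 j - a ord0 j)%:~R : rat) = r * (ev ord0 j)%:~R.
  by move=> j; rewrite intrB Hb Hdq mxE intrM intrq /r; ring.
set N := numq r; set D := denq r.
have rND : r = N%:~R / D%:~R by rewrite divq_num_den.
have D0 : (D%:~R : rat) != 0 by rewrite intr_eq0 gt_eqF ?denq_gt0.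
have HD : forall j, (D %| ev ord0 j)%Z.
  move=> j.
  have E : (b ord0 j - a ord0 j) * D = N * ev ord0 j.
    apply: (@intr_inj rat); rewrite !intrM Hr rND; field; exact: D0.
  have : (D %| N * ev ord0 j)%Z by rewrite -E dvdz_mull.
  rewrite Gauss_dvdzr //.
  by rewrite coprimezE coprime_sym coprime_num_den.
set w : 'rV[int]_dim := \row_j (ev ord0 j %/ D)%Z.
have Ew : ev = D *: w by apply/rowP => j; rewrite !mxE mulrC divzK.
have D1 : D = 1.
  have := (proj2 Hprim) D w Ew; have := denq_gt0 r; rewrite -/D; lia.
have rN : r = N%:~R by rewrite rND D1 divr1.
have tN : t = N%:~R / q%:R.
  by rewrite -rN /r mulfK // gt_eqF // qpos.
exists N; split=> //; rewrite /root.
have -> : a + N *: ev = b.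
  apply/rowP => j; apply: (@intr_inj rat).
  by rewrite Hb !mxE intrD intrM tN Hdq mxE intrM intrq; field; rewrite gt_eqF // qpos.
exact: Vb.
Qed.

Lemma floor_bound (v : rat) (k : int) : v <= k%:~R / q%:R -> Num.floor (v * q%:R) <= k.
Proof.
move=> H; rewrite -(ler_int rat); apply: le_trans (floor_le _) _.
by rewrite -ler_pdivlMr ?qpos.
Qed.

Lemma is_pval_iff a p : is_pval f dv a p <-> exists P, pvalZ a P /\ p = P%:~R / q%:R.
Proof.
split.
- move=> [v [[vlow vgreat] onVp vp pv1 pvmax]].
  have [P [RP pP]] := onV_root onVp.
  have HM : forall k, root a k -> Num.floor (v * q%:R) <= k.
    by move=> k Rk; apply: floor_bound; apply: vlow; apply: onV_of_root.
  have [m [Rm Hm]] := minroot_ex RP HM.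
  have vm : v = m%:~R / q%:R.
    apply/eqP; rewrite eq_le; apply/andP; split.
      by apply: vlow; apply: onV_of_root.
    apply: vgreat => t /onV_root [k [Rk ->]]; rewrite ratq_le; exact: Hm.
  exists P; split=> //; exists m; split=> //.
  + by rewrite -(ratq_le m P) -vm -pP.
  + by rewrite -(ratq_lt P (m + q%:Z)) -ratq_add1 -vm -pP.
  + move=> k Rk Hk; rewrite -(ratq_le k P) -pP; apply: pvmax; first exact: onV_of_root.
      by rewrite vm ratq_le; apply: Hm.
    by rewrite vm ratq_add1 ratq_lt.
- move=> [P [[m [[Rm Hm] RP H1 H2 H3]] ->]].
  exists (m%:~R / q%:R); split.
  + split.
      by move=> t /onV_root [k [Rk ->]]; rewrite ratq_le; apply: Hm.
    by move=> w Hw; apply: Hw; apply: onV_of_root.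
  + exact: onV_of_root.
  + by rewrite ratq_le.
  + by rewrite ratq_add1 ratq_lt.
  + move=> t /onV_root [k [Rk ->]]; rewrite ratq_add1 !ratq_le ratq_lt => _ Hk.
    exact: H3.
Qed.

Lemma val_iff a : val_gt_ninf f dv a <-> exists M, forall k, root a k -> M <= k.
Proof.
split.
- move=> [m Hm]; exists (Num.floor (m * q%:R)) => k Rk.
  by apply: floor_bound; apply: Hm; apply: onV_of_root.
- move=> [M HM]; exists (M%:~R / q%:R) => t /onV_root [k [Rk ->]].
  by rewrite ratq_le; apply: HM.
Qed.

Lemma Vmon'_iff b : Vmon' f dv b <-> pvalZ b 0.
Proof.
split.
- move=> [a [p [/is_pval_iff [P [HP ->]] Hb]]].
  have -> : b = a + P *: ev.
    apply/rowP => j; apply: (@intr_inj rat).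
    rewrite Hb !mxE intrD intrM Hdq mxE intrM intrq; field; by rewrite gt_eqF // qpos.
  by have := pvalZ_shift P HP; rewrite subrr.
- move=> H; exists b, 0; split.
    by apply/is_pval_iff; exists 0; split=> //; rewrite mul0r.
  by move=> j; rewrite mul0r addr0.
Qed.

Lemma W_add {be a s} : W h be a -> inS h s -> W h be (a + s).
Proof.
move=> [Sa Ha] Ss; split; first exact: inS_add.
by move=> i; rewrite linD; apply: le_trans (Ha i) _; rewrite lerDl.
Qed.

Lemma W_shift {be a k} : compatible h dv be -> W h be a -> inS h (a + k *: ev) ->
  W h be (a + k *: ev).
Proof.
move=> Hc [Sa Ha] Sk; split=> // i.
case: (Hc i) => [->|/lin_ev0 E]; first exact: Sk.
by rewrite linD linZ E mulr0 addr0.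
Qed.

Lemma vpt_S {a P} : inS h a -> pvalZ a P -> 0 <= P -> inS h (a + P *: ev).
Proof.
move=> Sa [m [[Rm Hm] RP H1 H2 H3]] P0.
apply: NNPP => NS.
have Sa0 : inS h (a + 0 *: ev) by rewrite scale0r addr0.
have [k [k0 kP Sk Sk1]] := exit_exists P0 Sa0 NS.
have := Hm _ (root_exit Sk Sk1); lia.
Qed.

Lemma vpt_W {be a P} : compatible h dv be -> W h be a -> pvalZ a P -> W h be (a + P *: ev).
Proof.
move=> Hc Wa HP; case: (lerP 0 P) => P0.
  by apply: W_shift => //; apply: vpt_S => //; case: Wa.
have -> : a + P *: ev = a + (- P) *: (- ev) by rewrite scaleNr scalerN opprK.
by apply: W_add => //; apply: inS_scale; [lia|exact: inS_me].
Qed.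

Lemma Vmon'_vpt {a P} : pvalZ a P -> Vmon' f dv (a + P *: ev).
Proof. by move=> HP; apply/Vmon'_iff; have := pvalZ_shift P HP; rewrite subrr. Qed.

Section Good.
Variable B : ('I_n -> nat) -> Prop.
Hypothesis HB : good_family h f dv ev q B.

Definition G a := Vmon' f dv a /\ WB h B a.
Definition E2 a := WB h B a /\ exists P, pvalZ a P /\ 0 <= P.

Lemma WB_pval {a} : WB h B a -> exists P, pvalZ a P.
Proof.
move=> Wa; have [_ _ H1 _ _] := HB.
have [M HM] := (proj1 (val_iff a)) (H1 _ Wa).
have [be [_ [Sa _]]] := Wa.
have [k0 R0] := root_exists Sa.
have [m Hm] := minroot_ex R0 HM.
exact: pvalZ_ex Hm.
Qed.

Lemma WB_vpt {a P} : WB h B a -> pvalZ a P -> WB h B (a + P *: ev).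
Proof.
move=> [be [Bbe Wa]] HP; exists be; split=> //.
have [_ Hc _ _ _] := HB; exact: vpt_W (Hc _ Bbe) Wa HP.
Qed.

Lemma block {b P} : WB h B b -> pvalZ b P ->
  (forall k, root b k -> P - q%:Z + 1 <= k) /\
  (forall k, P - q%:Z + 1 <= k -> k <= P -> root b k).
Proof.
move=> Wb HP.
have Wc := WB_vpt Wb HP.
have Vc := Vmon'_vpt HP.
have [_ _ _ H2 _] := HB.
have := proj1 (Vmon'_iff _) Vc => [[m [[Rm Hm] R0 H1 H1' H3]]].
split.
- move=> k Rk.
  have : root (b + P *: ev) (k - P) by rewrite rootS; have -> : P + (k - P) = k by ring.
  move/Hm; lia.
- move=> k Hk1 Hk2.
  have Hi : (`|P - k| < q)%N.
    rewrite -ltz_nat gez0_abs; lia.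
  have := H2 _ Vc Wc _ Hi.
  rewrite gez0_abs; last by lia.
  by have -> : b + P *: ev - (P - k) *: ev = b + k *: ev by vec.
Qed.

Lemma genE_E2 {a} : genE h G a -> E2 a.
Proof.
move=> [g [[Vg [be [Bbe Wg]]] Sag]].
have Wa : W h be a by have := W_add Wg Sag; rewrite [g + _]addrC subrK.
have WBa : WB h B a by exists be.
split=> //.
have [P HP] := WB_pval WBa.
exists P; split=> //.
case: (lerP 0 P) => // P0; exfalso.
have [_ _ _ _ H3] := HB.
apply: (H3 (a + P *: ev) g (Vmon'_vpt HP) (WB_vpt WBa HP) Vg (ex_intro _ be (conj Bbe Wg))).
exists ((a - g) + (- (P + 1)) *: (- ev)); split.
  by apply: inS_add => //; apply: inS_scale; [lia|exact: inS_me].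
vec.
Qed.

Lemma E2_genE {a} : E2 a -> genE h G a.
Proof.
move=> [WBa [P [HP P0]]].
exists (a + P *: ev); split; first by split; [exact: Vmon'_vpt|exact: WB_vpt].
have -> : a - (a + P *: ev) = P *: (- ev) by vec.
by apply: inS_scale => //; exact: inS_me.
Qed.

Lemma E2_A {a} : E2 a -> evalZ f a != 0 -> E2 (a + dv).
Proof.
move=> [WBa [P [HP P0]]] Hf.
have [Hlow Hup] := block WBa HP.
have HPq : q%:Z <= P.
  case: (lerP q%:Z P) => // HH; exfalso.
  have := Hup 0 ltac:(lia) P0; rewrite /root scale0r addr0 /Vmon => E.
  by move: Hf; rewrite E eqxx.
have Eadv : a + dv = a + q%:Z *: ev by rewrite Hdq.
rewrite Eadv; split; last first.
  exists (P - q%:Z); split; [exact: pvalZ_shift|lia].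
have [be [Bbe Wa]] := WBa; exists be; split=> //.
have [_ Hc _ _ _] := HB.
refine (W_shift (Hc _ Bbe) Wa _).
apply: (inS_down (k := P)) => //.
by apply: vpt_S => //; case: Wa.
Qed.

Lemma E2_B {b} : E2 b -> evalZ f (b - dv) != 0.
Proof.
move=> [WBb [P [HP P0]]].
have [Hlow _] := block WBb HP.
apply/eqP => E.
have : root b (- q%:Z) by rewrite /root /Vmon -E Hdq scaleNr.
by move/Hlow; lia.
Qed.

Lemma genE_Sideal : Sideal h (genE h G).
Proof.
split.
- move=> a [g [[_ [be [_ [Sg _]]]] Sag]].
  by have := inS_add Sg Sag; rewrite [g + _]addrC subrK.
- move=> a s [g [Gg Sag]] Ss; exists g; split=> //.
  by have := inS_add Sag Ss; rewrite addrAC.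
Qed.

Lemma G_exists : exists g, G g.
Proof.
have [[be Bbe] _ _ _ _] := HB.
have [_ _ [a0 Ha0] _ _] := Hfacet.
set N := (\sum_(i < n) be i)%N.
have Wa : W h be (N%:Z *: a0).
  split=> i; rewrite linZ.
    by apply: mulr_ge0 => //; apply: ltW.
  have Hb : (be i <= N)%N by rewrite /N (bigD1 i) //= leq_addr.
  have := Ha0 i; rewrite -lez_nat in Hb; nia.
have WBa : WB h B (N%:Z *: a0) by exists be.
have [P HP] := WB_pval WBa.
by exists (N%:Z *: a0 + P *: ev); split; [exact: Vmon'_vpt|exact: WB_vpt].
Qed.

Lemma good_fixes : fixes f dv (mideal h (genE h G)).
Proof.
apply/(fixes_char genE_Sideal Hmd); split.
- by move=> a /genE_E2 Ea Hf; apply: E2_genE; apply: E2_A.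
- by move=> b /genE_E2; apply: E2_B.
Qed.

End Good.

Section Fixed.
Variable E : 'rV[int]_dim -> Prop.
Hypothesis ES : Sideal h E.
Hypothesis HA : forall a, E a -> evalZ f a != 0 -> E (a + dv).
Hypothesis HBb : forall b, E b -> evalZ f (b - dv) != 0.

Lemma line_struct {c k0} : E (c + k0 *: ev) -> exists K,
  [/\ pvalZ c K, (forall k, root c k -> K - q%:Z + 1 <= k),
      (forall k, K - q%:Z + 1 <= k -> k <= K -> root c k),
      E (c + K *: ev) & (forall k, E (c + k *: ev) -> k <= K)].
Proof.
move=> E0.
have [i0 Hi0] := exists_i0.
have [ESS EI] := ES.
have HN : forall k, E (c + k *: ev) -> k <= `|lin (h i0) c|.
  move=> k /ESS /(_ i0); rewrite linD linZ => HH.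
  have := ler_norm (lin (h i0) c); nia.
have [K [EK HK]] := int_max (fun k => E (c + k *: ev)) k0 _ E0 HN.
have down : forall k, k <= K -> E (c + k *: ev).
  move=> k Hk.
  have -> : c + k *: ev = (c + K *: ev) + (K - k) *: (- ev) by vec.
  by apply: EI => //; apply: inS_scale; [lia|exact: inS_me].
have noroot : forall k, k <= K - q%:Z -> ~ root c k.
  move=> k Hk Rk.
  have := HBb _ (down (k + q%:Z) ltac:(lia)).
  have -> : c + (k + q%:Z) *: ev - dv = c + k *: ev by rewrite Hdq; vec.
  by rewrite Rk eqxx.
have roots : forall k, K - q%:Z + 1 <= k -> k <= K -> root c k.
  move=> k Hk1 Hk2; apply: NNPP => NR.
  have Hf : evalZ f (c + k *: ev) != 0 by apply/eqP.
  have := HA _ (down k Hk2) Hf.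
  have -> : c + k *: ev + dv = c + (k + q%:Z) *: ev by rewrite Hdq; vec.
  move/HK; move: Hq; lia.
have lower : forall k, root c k -> K - q%:Z + 1 <= k.
  move=> k Rk; case: (lerP (K - q%:Z + 1) k) => // HH.
  by exfalso; apply: (noroot k) => //; lia.
exists K; split=> //.
exists (K - q%:Z + 1); split.
- split; [apply: roots; move: Hq; lia | exact: lower].
- by apply: roots; move: Hq; lia.
- by move: Hq; lia.
- by lia.
- by move=> k Rk Hk; lia.
Qed.

Definition Bdef (be : 'I_n -> nat) :=
  compatible h dv be /\ forall c, W h be c -> exists k, E (c + k *: ev).

Lemma Bdef_good (a : 'rV[int]_dim) : E a -> good_family h f dv ev q Bdef.
Proof.
move=> Ea.
have [ESS EI] := ES.
split.
- set be := fun i => if lin (h i) dv == 0 then `|lin (h i) a|%N else 0%N.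
  exists be; split.
    by move=> i; rewrite /be; case: (lin (h i) dv =P 0) => [E0|_]; [right|left].
  move=> c [Sc Wc].
  set J := (\sum_(i < n) `|lin (h i) a|%N)%N.
  exists (- J%:Z).
  have -> : c + (- J%:Z) *: ev = a + (c + (- J%:Z) *: ev - a) by rewrite [a + _]addrC subrK.
  apply: EI => // i.
  rewrite linB linD linZ.
  have Sai := ESS _ Ea i.
  have HJ : (`|lin (h i) a| <= J)%N by rewrite /J (bigD1 i) //= leq_addr.
  rewrite -lez_nat gez0_abs // in HJ.
  have Sci := Sc i; have Wci := Wc i; move: Wci; rewrite /be.
  case: eqP => [/lin_ev0 E0|Hne].
    by rewrite E0 mulr0 addr0 gez0_abs // subr_ge0.
  have Hle := lin_ev_le0 i.
  have Hlt : lin (h i) ev < 0.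
    rewrite lt_neqAle Hle andbT; apply/eqP => E0; apply: Hne.
    by rewrite lin_dv E0 mulr0.
  move=> _; nia.
- by move=> be [].
- move=> c [be [[_ Hbe] Wc]].
  have [k Ek] := Hbe _ Wc.
  have [K [_ Hlow _ _ _]] := line_struct Ek.
  by apply/val_iff; exists (K - q%:Z + 1).
- move=> c Vc [be [[_ Hbe] Wc]] i Hi.
  have [k Ek] := Hbe _ Wc.
  have [K [HK _ Hup _ _]] := line_struct Ek.
  have K0 := pvalZ_uniq HK (proj1 (Vmon'_iff c) Vc); subst K.
  have := Hup (- i%:Z) ltac:(lia) ltac:(lia).
  by rewrite /root scaleNr.
- move=> a1 b1 Va [be [[_ Hbe] Wa]] Vb [be' [[_ Hbe'] Wb]] [s [Ss Hs]].
  have [k Ek] := Hbe _ Wa.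
  have [K [HK _ _ _ HmaxK]] := line_struct Ek.
  have K0 := pvalZ_uniq HK (proj1 (Vmon'_iff a1) Va); subst K.
  have [k' Ek'] := Hbe' _ Wb.
  have [K' [HK' _ _ EK' _]] := line_struct Ek'.
  have K0 := pvalZ_uniq HK' (proj1 (Vmon'_iff b1) Vb); subst K'.
  move: EK'; rewrite scale0r addr0 => Eb.
  have : E (a1 + 1 *: ev).
    have -> : a1 + 1 *: ev = b1 + s.
      by rewrite -[a1](subrK b1) Hs; vec.
    exact: EI.
  by move/HmaxK.
Qed.

End Fixed.

Lemma ratq_ge0 (P : int) : (0 <= P%:~R / q%:R :> rat) = (0 <= P).
Proof. by rewrite -(ratq_le 0 P) mul0r. Qed.

Lemma main_sec :
  ((exists E : 'rV[int]_dim -> Prop,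
      [/\ Sideal h E,
          (exists r, mideal h E r /\ exists a, r a != 0) &
          fixes f dv (mideal h E)])
   <-> (exists B : ('I_n -> nat) -> Prop, good_family h f dv ev q B))
  /\
  (forall B : ('I_n -> nat) -> Prop, good_family h f dv ev q B ->
     let I := mideal h (genE h (fun a => Vmon' f dv a /\ WB h B a)) in
     fixes f dv I /\
     (forall a, Exp h I a <-> (WB h B a /\ exists p, is_pval f dv a p /\ 0 <= p))).
Proof.
split; first split.
- move=> [E [ES [r [[_ Hr] [a ra]]] Hfix]].
  have [HA HBb] := (proj1 (fixes_char ES Hmd)) Hfix.
  exists (Bdef E); exact: (@Bdef_good E ES HA HBb a (Hr _ ra)).
- move=> [B HB].
  exists (genE h (G B)); split.
  + exact: genE_Sideal.
  + have [g Gg] := G_exists B HB.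
    exists (monomial g); split; last by exists g; rewrite monomial_aa oner_eq0.
    apply: mideal_mono; first exact: genE_Sideal.
    exists g; split=> //; rewrite subrr => i; by rewrite lin0.
  + exact: good_fixes.
- move=> B HB I; split; first exact: good_fixes.
  move=> a; split.
  + move=> [Sa [_ Hm]].
    have := Hm a; rewrite monomial_aa oner_eq0 => /(_ isT) /(genE_E2 B HB) [WBa [P [HP P0]]].
    split=> //; exists (P%:~R / q%:R); split; last by rewrite ratq_ge0.
    by apply/is_pval_iff; exists P.
  + move=> [WBa [p [/is_pval_iff [P [HP ->]] p0]]].
    rewrite ratq_ge0 in p0.
    have Ea : genE h (G B) a by apply: E2_genE => //; split=> //; exists P.
    split; first by have [be [_ [Sa _]]] := WBa.
    have HH := mideal_mono (genE_Sideal B) Ea. rewrite /I; exact: HH.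
Qed.

End Main.

Theorem mainTheorem9 (dim n : nat) (h : 'I_n -> 'rV[int]_dim)
  (f : {mpoly CC[dim]}) (dv ev : 'rV[int]_dim) (q : nat) :
  facet_data h ->
  (* delta = x^d f(theta) is a homogeneous operator of degree d: H_d | f *)
  (exists g : {mpoly CC[dim]}, f = Hpoly h dv * g) ->
  dv != 0 -> inS h (- dv) -> (0 < q)%N -> primitive ev -> dv = (q%:Z) *: ev ->
  ((exists E : 'rV[int]_dim -> Prop,
      [/\ Sideal h E,
          (exists r, mideal h E r /\ exists a, r a != 0) &
          fixes f dv (mideal h E)])
   <-> (exists B : ('I_n -> nat) -> Prop, good_family h f dv ev q B))
  /\
  (forall B : ('I_n -> nat) -> Prop, good_family h f dv ev q B ->
     let I := mideal h (genE h (fun a => Vmon' f dv a /\ WB h B a)) in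
     fixes f dv I /\
     (forall a, Exp h I a <-> (WB h B a /\ exists p, is_pval f dv a p /\ 0 <= p))).
Proof.
move=> Hfacet Hdiv _ Hmd Hq Hprim Hdq.
by apply: main_sec.
Qed.
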